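(* Let $K$ be a non-Archimedean locally compact field of characteristic $p>0$ with group of 1-units $U=1+M_K$, and let $\Lambda$ be the set of locally analytic group endomorphisms $U\to U$. Let $f\in\Lambda$ with $f(1+x)=\sum_{n=0}^{\infty}a_nx^n$ for all $x\in M_K$, where $\sum a_nx^n\in 1+x\mathbb{F}_p[[x]]$. Then for each $n\ge0$, $a_n=0$ if and only if the Hasse derivative $\mathsf{D}^{(n)}f(1+x)$ is identically zero. In particular, $a_1=0$ if and only if $f(1+x)=g(1+x)^p$ for some $g\in\Lambda$.
   Context: $M_K$ is the maximal ideal of the ring of integers $R_K$ of $K$; with constant field $\mathbb{F}$ of order $q$ and uniformizer $\pi$, $K=\mathbb{F}((\pi))$, $U=1+\pi\mathbb{F}[[\pi]]$, and $|x|=q^{-v(x)}$. A continuous function $f$ on a ball $B_{\alpha,t}=\{u\in R_K:|u-\alpha|\le t\}$, $t=|\rho|$, is analytic there if $f(u)=\sum_{n\ge0}c_n\left(\frac{u-\alpha}{\rho}\right)^n$ with $c_n\in K$, $c_n\to0$; $f:U\to K$ is locally analytic if each $\alpha\in U$ has a ball $B_{\alpha,t_\alpha}\subset U$, $t_\alpha>0$, on which $f$ is analytic. The Hasse derivative of order $m$ of $f(1+x)=\sum_k a_kx^k$ is $\mathsf{D}^{(m)}f(1+x)=\sum_{k\ge m}\binom{k}{m}a_kx^{k-m}$. *)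

(* Defs.v *)
(* K = F((pi)) with F a finite field; elements of R_K = F[[pi]]
   are coefficient sequences nat -> F; elements of K are represented as
   pi^(-e) * s with e : nat and s in R_K. *)
From HB Require Import structures.
From mathcomp Require Import all_boot all_order all_algebra all_field.
Set Implicit Arguments. Unset Strict Implicit. Unset Printing Implicit Defensive.
Import Order.TTheory GRing.Theory Num.Theory.
Local Open Scope ring_scope.

Definition ps (F : Type) := nat -> F.

Definition ps_zero (F : nzRingType) : ps F := fun _ => 0.
Definition ps_one (F : nzRingType) : ps F := fun k => (k == 0%N)%:R.
Definition ps_add (F : nzRingType) (s t : ps F) : ps F := fun k => s k + t k.
Definition ps_sub (F : nzRingType) (s t : ps F) : ps F := fun k => s k - t k.
Definition ps_mul (F : nzRingType) (s t : ps F) : ps F :=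
  fun k => \sum_(i < k.+1) s i * t (k - i)%N.
Definition ps_exp (F : nzRingType) (s : ps F) (n : nat) : ps F :=
  iter n (ps_mul s) (ps_one F).

Definition in_M (F : nzRingType) (x : ps F) : Prop := x 0%N = 0.
Definition in_U (F : nzRingType) (u : ps F) : Prop := u 0%N = 1.

(* ball B_{alpha,|rho|} = {u in R_K : v(u - alpha) >= v(rho)} *)
Definition in_ball (F : nzRingType) (alpha rho u : ps F) : Prop :=
  forall i, (forall j, (j <= i)%N -> rho j = 0) -> u i - alpha i = 0.

Definition laurent (F : Type) := (nat * ps F)%type.

Definition lcoef (F : nzRingType) (c : laurent F) (j : int) : F :=
  match (j + (c.1)%:Z)%R with Posz k => c.2 k | Negz _ => 0 end.
Definition pcoef (F : nzRingType) (s : ps F) (j : int) : F :=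
  match j with Posz k => s k | Negz _ => 0 end.

Definition tends_to_zero (F : nzRingType) (c : nat -> laurent F) : Prop :=
  forall B : nat, exists N : nat, forall n, (N <= n)%N ->
    forall j : int, j < B%:Z -> lcoef (c n) j = 0.

Definition series_sum (F : nzRingType) (t : nat -> laurent F) (S : ps F) : Prop :=
  forall j : int, exists N : nat, forall M, (N <= M)%N ->
    \sum_(n < M) lcoef (t n) j = pcoef S j.

Definition continuous_on_ball (F : nzRingType) (f : ps F -> ps F) (alpha rho : ps F) : Prop :=
  forall u, in_ball alpha rho u -> forall N : nat, exists M : nat,
    forall v, in_ball alpha rho v -> (forall i, (i < M)%N -> u i = v i) ->
      forall i, (i < N)%N -> f u i = f v i.

(* f(u) = sum_n c_n ((u - alpha)/rho)^n on the ball, c_n in K, c_n -> 0 *)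
Definition analytic_on_ball (F : nzRingType) (f : ps F -> ps F) (alpha rho : ps F) : Prop :=
  continuous_on_ball f alpha rho /\
  exists c : nat -> laurent F, tends_to_zero c /\
    forall u w, in_ball alpha rho u -> ps_mul rho w = ps_sub u alpha ->
      series_sum (fun n => ((c n).1, ps_mul (c n).2 (ps_exp w n))) (f u).

Definition locally_analytic (F : nzRingType) (f : ps F -> ps F) : Prop :=
  forall alpha, in_U alpha -> exists rho : ps F,
    rho <> ps_zero F /\ (forall u, in_ball alpha rho u -> in_U u) /\
    analytic_on_ball f alpha rho.

Definition U_endo (F : nzRingType) (f : ps F -> ps F) : Prop :=
  (forall u, in_U u -> in_U (f u)) /\
  (forall u v, in_U u -> in_U v -> f (ps_mul u v) = ps_mul (f u) (f v)).

Definition in_Lambda (F : nzRingType) (f : ps F -> ps F) : Prop :=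
  U_endo f /\ locally_analytic f.

Definition pseries_eval (F : nzRingType) (a : nat -> F) (x S : ps F) : Prop :=
  series_sum (fun n => (0%N, fun k => a n * ps_exp x n k)) S.

Definition hasse (F : nzRingType) (a : nat -> F) (m : nat) : ps F :=
  fun j => ('C(j + m, m))%:R * a (j + m)%N.

(* Main.v *)
Require Import Defs.
From HB Require Import structures.
From mathcomp Require Import all_boot all_order all_algebra all_field.
From Stdlib Require Import FunctionalExtensionality.
From mathcomp Require Import zify ring.
Set Implicit Arguments. Unset Strict Implicit. Unset Printing Implicit Defensive.
Import GRing.Theory.
Local Open Scope ring_scope.

Definition tr (F : fieldType) (K : nat) (s : ps F) : {poly F} := \poly_(i < K) s i.
Definition eqt (F : fieldType) (K : nat) (p q : {poly F}) : Prop :=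
  forall i, (i < K)%N -> p`_i = q`_i.

Lemma eqt_refl (F : fieldType) K (p : {poly F}) : eqt K p p.
Proof. by []. Qed.
Lemma eqt_sym (F : fieldType) K (p q : {poly F}) : eqt K p q -> eqt K q p.
Proof. by move=> h i hi; rewrite h. Qed.
Lemma eqt_trans (F : fieldType) K (p q r : {poly F}) : eqt K p q -> eqt K q r -> eqt K p r.
Proof. by move=> h1 h2 i hi; rewrite h1 // h2. Qed.
Lemma eqtW (F : fieldType) K K' (p q : {poly F}) : (K' <= K)%N -> eqt K p q -> eqt K' p q.
Proof. by move=> hK h i hi; apply: h; apply: leq_trans hK. Qed.
Lemma eqt_add (F : fieldType) K (p q p' q' : {poly F}) :
  eqt K p p' -> eqt K q q' -> eqt K (p + q) (p' + q').
Proof. by move=> h1 h2 i hi; rewrite !coefD h1 // h2. Qed.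
Lemma eqt_opp (F : fieldType) K (p p' : {poly F}) :
  eqt K p p' -> eqt K (- p) (- p').
Proof. by move=> h1 i hi; rewrite !coefN h1. Qed.
Lemma eqt_sub (F : fieldType) K (p q p' q' : {poly F}) :
  eqt K p p' -> eqt K q q' -> eqt K (p - q) (p' - q').
Proof. by move=> h1 h2; apply: eqt_add => //; apply: eqt_opp. Qed.
Lemma eqt_mul (F : fieldType) K (p q p' q' : {poly F}) :
  eqt K p p' -> eqt K q q' -> eqt K (p * q) (p' * q').
Proof.
move=> h1 h2 i hi; rewrite !coefM; apply: eq_bigr => j _.
have hj : (j < K)%N by apply: leq_ltn_trans hi; rewrite -ltnS.
have hij : (i - j < K)%N by apply: leq_ltn_trans hi; apply: leq_subr.
by rewrite h1 // h2.
Qed.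
Lemma eqt_exp (F : fieldType) K (p p' : {poly F}) n :
  eqt K p p' -> eqt K (p ^+ n) (p' ^+ n).
Proof. by move=> h; elim: n => [|n IH] //; rewrite !exprS; apply: eqt_mul. Qed.
Lemma eqt_sum (F : fieldType) K (I : finType) (P Q : I -> {poly F}) :
  (forall i, eqt K (P i) (Q i)) -> eqt K (\sum_i P i) (\sum_i Q i).
Proof. by move=> h k hk; rewrite !coef_sum; apply: eq_bigr => i _; rewrite h. Qed.

Lemma coef_tr (F : fieldType) K (s : ps F) i : (i < K)%N -> (tr K s)`_i = s i.
Proof. by move=> hi; rewrite /tr coef_poly hi. Qed.

Lemma tr_def (F : fieldType) K (s : ps F) : tr K s = \sum_(n < K) (s n)%:P * 'X^n.
Proof. by rewrite /tr poly_def; apply: eq_bigr => i _; rewrite mul_polyC. Qed.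

Lemma tr_le (F : fieldType) K K' (s : ps F) : (K <= K')%N -> eqt K (tr K s) (tr K' s).
Proof. by move=> h i hi; rewrite !coef_tr // (leq_trans hi h). Qed.

Lemma tr_mul (F : fieldType) K (s t : ps F) : eqt K (tr K (ps_mul s t)) (tr K s * tr K t).
Proof.
move=> i hi; rewrite coef_tr // coefM /ps_mul; apply: eq_bigr => j _.
have hj : (j < K)%N by apply: leq_ltn_trans hi; rewrite -ltnS.
have hij : (i - j < K)%N by apply: leq_ltn_trans hi; apply: leq_subr.
by rewrite !coef_tr.
Qed.
Lemma tr_add (F : fieldType) K (s t : ps F) : eqt K (tr K (ps_add s t)) (tr K s + tr K t).
Proof. by move=> i hi; rewrite coefD !coef_tr. Qed.
Lemma tr_sub (F : fieldType) K (s t : ps F) : eqt K (tr K (ps_sub s t)) (tr K s - tr K t).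
Proof. by move=> i hi; rewrite coefB !coef_tr. Qed.
Lemma tr_one (F : fieldType) K : eqt K (tr K (ps_one F)) 1.
Proof. by move=> i hi; rewrite coef_tr // coef1 /ps_one; case: (i == 0%N). Qed.
Lemma tr_exp (F : fieldType) K (s : ps F) n : eqt K (tr K (ps_exp s n)) (tr K s ^+ n).
Proof.
elim: n => [|n IH]; first exact: tr_one.
rewrite exprS; change (ps_exp s n.+1) with (ps_mul s (ps_exp s n)); refine (eqt_trans (tr_mul (K:=K) s (ps_exp s n)) _); exact: eqt_mul.
Qed.

Definition pi (F : fieldType) : ps F := fun k => (k == 1%N)%:R.
Lemma tr_pi (F : fieldType) K : eqt K (tr K (pi F)) 'X.
Proof. by move=> i hi; rewrite coef_tr // coefX. Qed.

Lemma ps_ext (F : fieldType) (s t : ps F) : (forall K, eqt K (tr K s) (tr K t)) -> s = t.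
Proof.
move=> h; apply: functional_extensionality => k.
by have := h k.+1 k (ltnSn k); rewrite !coef_tr.
Qed.

Lemma val_mul (F : fieldType) (p q : {poly F}) n :
  (forall j, (j < n)%N -> q`_j = 0) -> forall j, (j < n)%N -> (p * q)`_j = 0.
Proof.
move=> h j hj; rewrite coefM big1 // => l _; rewrite h ?mulr0 //.
have := ltn_ord l; lia.
Qed.

Lemma val_exp (F : fieldType) (y : {poly F}) i :
  (forall j, (j < i)%N -> y`_j = 0) ->
  forall n, (forall k, (k < n * i)%N -> (y ^+ n)`_k = 0) /\ (y ^+ n)`_(n * i) = y`_i ^+ n.
Proof.
move=> hy; elim=> [|n [IH1 IH2]]; first by split => [k|]; rewrite mul0n // expr0 coef1.
have low : forall k, (k < n.+1 * i)%N -> (y ^+ n.+1)`_k = 0.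
  move=> k hk; rewrite exprS coefM big1 // => l _.
  have hl := ltn_ord l.
  case: (ltnP l i) => hli; first by rewrite hy // mul0r.
  rewrite IH1 ?mulr0 //; rewrite mulSn in hk; lia.
split => //.
rewrite exprS coefM.
have hi : (i < (n.+1 * i).+1)%N by rewrite ltnS mulSn leq_addr.
rewrite (bigD1 (Ordinal hi)) //= big1 ?addr0.
  by rewrite mulSn addKn IH2 exprS.
move=> l hl.
have hne : (nat_of_ord l) != i by [].
have hl' : (l < (i + n * i).+1)%N by rewrite -mulSn.
case: (ltnP l i) => hli; first by rewrite hy // mul0r.
rewrite IH1 ?mulr0 //; move: hne => /eqP; lia.
Qed.

Lemma inM_val (F : fieldType) (x : ps F) n k : in_M x -> (k < n)%N -> ps_exp x n k = 0.
Proof.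
move=> hx hk.
rewrite -(coef_tr (K := k.+1)) // (tr_exp (K:=k.+1)) //.
have h0 : forall j, (j < 1)%N -> (tr k.+1 x)`_j = 0.
  by move=> j; rewrite ltnS leqn0 => /eqP ->; rewrite coef_tr.
by have [h _] := val_exp h0 n; apply: h; rewrite muln1.
Qed.

Definition E (F : fieldType) (t : nat -> ps F) : ps F := fun k => \sum_(n < k.+1) t n k.

Lemma sum_widen (F : fieldType) (t : nat -> ps F) k M :
  (forall n, (k < n)%N -> t n k = 0) -> (k < M)%N ->
  \sum_(n < M) t n k = \sum_(n < k.+1) t n k.
Proof.
move=> h hM; rewrite (big_ord_widen M (fun n => t n k) hM) [RHS]big_mkcond /=.
by apply: eq_bigr => n _; case: ifP => // /negbT; rewrite -leqNgt => /h ->.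
Qed.

Lemma sum_tr (F : fieldType) K (t : nat -> ps F) (T : nat -> {poly F}) :
  (forall n k, (k < n)%N -> t n k = 0) -> (forall n, eqt K (tr K (t n)) (T n)) ->
  eqt K (tr K (E t)) (\sum_(n < K) T n).
Proof.
move=> h0 h i hi; rewrite coef_tr // coef_sum.
rewrite (eq_bigr (fun n : 'I_K => t n i)); last by move=> n _; rewrite -h // coef_tr.
by rewrite sum_widen // => n; apply: h0.
Qed.

Lemma series_E (F : fieldType) (t : nat -> ps F) :
  (forall n k, (k < n)%N -> t n k = 0) -> series_sum (fun n => (0%N, t n)) (E t).
Proof.
move=> h [k|k].
  exists k.+1 => M hM /=.
  rewrite (eq_bigr (fun n : 'I_M => t n k)); last by move=> n _; rewrite /lcoef /= addn0.
  by rewrite sum_widen // => n; apply: h.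
by exists 0%N => M _ /=; rewrite big1.
Qed.

Lemma E_of_series (F : fieldType) (t : nat -> ps F) S :
  (forall n k, (k < n)%N -> t n k = 0) -> series_sum (fun n => (0%N, t n)) S -> S = E t.
Proof.
move=> h hS; apply: functional_extensionality => k.
have [N HN] := hS (Posz k).
have := HN (maxn N k.+1) (leq_maxl _ _) => /=.
rewrite (eq_bigr (fun n : 'I_(maxn N k.+1) => t n k)); last by move=> n _; rewrite /lcoef /= addn0.
rewrite sum_widen ?leq_maxr // => n; exact: h.
Qed.

Definition Ev (F : fieldType) (a : nat -> F) (x : ps F) : ps F :=
  E (fun n k => a n * ps_exp x n k).

Lemma Ev_of_eval (F : fieldType) (a : nat -> F) x S :
  in_M x -> pseries_eval a x S -> S = Ev a x.
Proof.
move=> hx hS; apply: E_of_series => // n k hk; by rewrite inM_val ?mulr0.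
Qed.

Lemma tr_Ev (F : fieldType) K (a : nat -> F) x (X : {poly F}) :
  in_M x -> eqt K (tr K x) X -> eqt K (tr K (Ev a x)) (\sum_(n < K) (a n)%:P * X ^+ n).
Proof.
move=> hx hX; apply: (sum_tr (T := fun n => (a n)%:P * X ^+ n)) => [n k hk|n i hi]; first by rewrite inM_val ?mulr0.
rewrite coef_tr // coefCM; congr (_ * _).
by rewrite -(coef_tr (K:=K) (ps_exp x n)) // (tr_exp x n hi) (eqt_exp n hX hi).
Qed.

Lemma widen_zero (R : nmodType) (G : nat -> R) a M :
  (a <= M)%N -> (forall i, (a <= i)%N -> G i = 0) -> \sum_(i < a) G i = \sum_(i < M) G i.
Proof.
move=> hM h; rewrite (big_ord_widen M G hM) [LHS]big_mkcond /=.
by apply: eq_bigr => n _; case: ifP => // /negbT; rewrite -leqNgt => /h ->.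
Qed.

Definition Hp (F : fieldType) (c : nat -> F) K m (X : {poly F}) : {poly F} :=
  \sum_(n < K) (c n * ('C(n, m))%:R)%:P * X ^+ (n - m).

Lemma expand (F : fieldType) K (c : nat -> F) (X W : {poly F}) :
  \sum_(n < K) (c n)%:P * (X + W) ^+ n = \sum_(m < K) W ^+ m * Hp c K m X.
Proof.
under eq_bigr => n _ do rewrite exprDn mulr_sumr.
rewrite (eq_bigr (fun n : 'I_K => \sum_(i < K) (c n)%:P * (X ^+ (n - i) * W ^+ i *+ 'C(n, i)))).
  rewrite exchange_big /=; apply: eq_bigr => m _; rewrite /Hp mulr_sumr.
  apply: eq_bigr => n _; rewrite polyCM rmorph_nat -mulr_natr; ring.
move=> n _; apply: (widen_zero (G := fun i => (c n)%:P * (X ^+ (n - i) * W ^+ i *+ 'C(n, i)))).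
  exact: ltn_ord.
by move=> i hi; rewrite bin_small ?mulr0n ?mulr0.
Qed.

Lemma coef_Hp (F : fieldType) (c : nat -> F) K m j :
  (j + m < K)%N -> (Hp c K m 'X)`_j = c (j + m) * ('C(j + m, m))%:R.
Proof.
move=> hj; rewrite /Hp coef_sum (bigD1 (Ordinal hj)) //= big1.
  by rewrite coefCM coefXn addnK eqxx mulr1 addr0.
move=> n hn; rewrite coefCM coefXn.
case: (ltnP n m) => hnm; first by rewrite bin_small // mulr0 !mul0r.
case: eqP => e; last by rewrite mulr0.
by move: hn; rewrite -val_eqE /= e subnK // eqxx.
Qed.

Lemma eqt_eq (F : fieldType) K (p q r : {poly F}) : eqt K p q -> q = r -> eqt K p r.
Proof. by move=> h <-. Qed.

Lemma ps_split (F : fieldType) (y : ps F) : y = ps_add (ps_one F) (ps_sub y (ps_one F)).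
Proof. by apply: functional_extensionality => k; rewrite /ps_add /ps_sub; ring. Qed.
Lemma inU_M (F : fieldType) (y : ps F) : in_U y -> in_M (ps_sub y (ps_one F)).
Proof. by rewrite /in_U /in_M /ps_sub /ps_one => ->; rewrite subrr. Qed.
Lemma inM_U (F : fieldType) (x : ps F) : in_M x -> in_U (ps_add (ps_one F) x).
Proof. by rewrite /in_U /in_M /ps_add /ps_one => ->; rewrite addr0. Qed.
Lemma pi_M (F : fieldType) : in_M (pi F).
Proof. by []. Qed.
Lemma piN_M (F : fieldType) N : (0 < N)%N -> in_M (ps_exp (pi F) N).
Proof. by move=> hN; rewrite /in_M inM_val. Qed.
Lemma mul_U (F : fieldType) (u v : ps F) : in_U u -> in_U v -> in_U (ps_mul u v).
Proof. by rewrite /in_U /ps_mul big_ord_recl big_ord0 /= => -> ->; rewrite mulr1 addr0. Qed.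
Lemma add_sub1 (F : fieldType) (x : ps F) : ps_sub (ps_add (ps_one F) x) (ps_one F) = x.
Proof. by apply: functional_extensionality => k; rewrite /ps_add /ps_sub; ring. Qed.

Lemma key (F : fieldType) (f : ps F -> ps F) (a : nat -> F)
  (hfm : forall u v, in_U u -> in_U v -> f (ps_mul u v) = ps_mul (f u) (f v))
  (hfE : forall u, in_U u -> f u = Ev a (ps_sub u (ps_one F))) K N : (0 < N)%N ->
  eqt K (\sum_(n < K) (a n)%:P * ('X + 'X^N * (1 + 'X)) ^+ n)
        ((\sum_(n < K) (a n)%:P * 'X ^+ n) * \sum_(n < K) (a n)%:P * ('X^N) ^+ n).
Proof.
move=> hN.
set u := ps_add (ps_one F) (pi F); set v := ps_add (ps_one F) (ps_exp (pi F) N).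
have hu : in_U u by apply: inM_U.
have hv : in_U v by apply: inM_U; apply: piN_M.
have huv := mul_U hu hv.
have hm := hfm u v hu hv.
have e1 : eqt K (tr K (f (ps_mul u v))) (\sum_(n < K) (a n)%:P * ('X + 'X^N * (1 + 'X)) ^+ n).
  rewrite hfE //; apply: tr_Ev; first exact: inU_M.
  apply: (eqt_eq (q := ((1 + 'X) * (1 + 'X^N)) - 1)); last by ring.
  apply: (eqt_trans (tr_sub _ _)); apply: eqt_sub; last exact: tr_one.
  apply: (eqt_trans (tr_mul _ _)); apply: eqt_mul.
    apply: (eqt_trans (tr_add _ _)); apply: eqt_add; [exact: tr_one | exact: tr_pi].
  apply: (eqt_trans (tr_add _ _)); apply: eqt_add; first exact: tr_one.
  apply: (eqt_trans (tr_exp _ _)); apply: eqt_exp; exact: tr_pi.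
apply: eqt_trans (eqt_sym e1) _; rewrite hm.
apply: (eqt_trans (tr_mul _ _)); apply: eqt_mul.
  rewrite hfE // /u add_sub1; apply: tr_Ev => //; exact: tr_pi.
rewrite hfE // /v add_sub1; apply: tr_Ev; first exact: piN_M.
apply: (eqt_trans (tr_exp _ _)); apply: eqt_exp; exact: tr_pi.
Qed.

Lemma ar_hi1 (P m i : nat) : (m <= P)%N -> (i < P + i.+1 - m)%N.
Proof. lia. Qed.
Lemma ar_idx (P Q m' i : nat) : (Q <= P)%N -> (m' <= Q)%N -> (P + i - Q < P + i.+1 - m')%N.
Proof. lia. Qed.
Lemma ar_lt (P Q N i : nat) : (P + N <= Q)%N -> (i < N)%N -> (Q <= P + i)%N -> False.
Proof. lia. Qed.
Lemma ar_sub (P i m : nat) : (i < P + i.+1 - m)%N -> (i < P + i.+1)%N.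
Proof. lia. Qed.
Lemma ar_lt2 (K i j : nat) : (i < K)%N -> (j < i.+1)%N -> (j < K)%N.
Proof. lia. Qed.
Lemma ar_sub2 (K j m : nat) : (j < K - m)%N -> (j + m < K)%N.
Proof. lia. Qed.

Lemma tr_tr (F : fieldType) K K' (s : ps F) i :
  (i < K)%N -> (i < K')%N -> eqt i.+1 (tr K s) (tr K' s).
Proof.
move=> h1 h2 j hj; rewrite !coef_tr //; [exact: ar_lt2 h2 hj | exact: ar_lt2 h1 hj].
Qed.

Lemma Hp_tr (F : fieldType) (a : nat -> F) K m :
  eqt (K - m) (Hp a K m 'X) (tr K (hasse a m)).
Proof.
move=> j hj; have hj' := ar_sub2 hj.
rewrite coef_Hp // coef_tr; first by rewrite /hasse mulrC.
apply: leq_ltn_trans hj'; exact: leq_addr.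
Qed.

Lemma claim (F : fieldType) (f : ps F -> ps F) (a : nat -> F)
  (hfm : forall u v, in_U u -> in_U v -> f (ps_mul u v) = ps_mul (f u) (f v))
  (hfE : forall u, in_U u -> f u = Ev a (ps_sub u (ps_one F))) m K :
  eqt K ((1 + 'X) ^+ m * tr K (hasse a m)) ((a m)%:P * tr K a).
Proof.
elim/ltn_ind: m K => m IH K i hi.
pose N := i.+1; pose K' := (N * m + i.+1)%N.
have hN : (0 < N)%N by [].
have hk := key hfm hfE (K:=K') hN.
rewrite (expand K' a 'X) in hk.
pose A := \sum_(n < K') (a n)%:P * 'X ^+ n.
pose D := fun m' => (1 + 'X) ^+ m' * Hp a K' m' 'X - (a m')%:P * A.
have hsum : \sum_(m' < K') ('X^N * (1 + 'X)) ^+ m' * Hp a K' m' 'X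
             - A * \sum_(n < K') (a n)%:P * ('X^N) ^+ n
           = \sum_(m' < K') 'X^(N * m') * D m'.
  rewrite mulr_sumr -sumrB; apply: eq_bigr => m' _.
  by rewrite /D exprMn -exprM; ring.
have hNm : (m <= N * m)%N by rewrite leq_pmull.
have hi1 : (i < K' - m)%N by exact: ar_hi1.
have hiK' : (i < K')%N by exact: ar_sub hi1.
have hmK : (m < K')%N by rewrite /K' addnS ltnS; apply: leq_trans hNm (leq_addr _ _).
have hz : (\sum_(m' < K') 'X^(N * m') * D m')`_(N * m + i) = 0.
  by rewrite -hsum coefB hk ?subrr // /K' ltn_add2l.
rewrite coef_sum (bigD1 (Ordinal hmK)) //= big1 ?addr0 in hz; last first.
  move=> m' hm'; rewrite coefXnM.
  case: ifP => // /negbT; rewrite -leqNgt => hle.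
  have hne : (nat_of_ord m') != m by [].
  case: (ltnP m' m) => hlt; last first.
    exfalso; have hlt' : (m < m')%N by rewrite ltn_neqAle eq_sym hne hlt.
    have : (N * m.+1 <= N * m')%N by rewrite leq_mul2l hlt' orbT.
    by rewrite mulnS addnC => /ar_lt /(_ (ltnSn i) hle).
  have IHm := IH m' hlt K'.
  have h1 : (N * m' <= N * m)%N by rewrite leq_mul2l ltnW ?orbT.
  have h2 : (m' <= N * m')%N by rewrite leq_pmull.
  have hidx : (N * m + i - N * m' < K' - m')%N by exact: ar_idx.
  rewrite /D coefB (eqt_mul (@eqt_refl _ _ ((1 + 'X) ^+ m')) (@Hp_tr _ a K' m') hidx).
  rewrite /A -tr_def IHm ?subrr //; apply: leq_trans hidx _; exact: leq_subr.
rewrite coefXnM ltnNge leq_addr /= addKn in hz.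
have e1 : eqt i.+1 ((1 + 'X) ^+ m * tr K (hasse a m)) ((1 + 'X) ^+ m * Hp a K' m 'X).
  apply: eqt_mul => //; apply: eqt_trans (tr_tr _ hi hiK') _.
  apply: eqtW (eqt_sym (@Hp_tr _ a K' m)); exact: hi1.
have e2 : eqt i.+1 ((a m)%:P * tr K a) ((a m)%:P * A).
  by apply: eqt_mul => //; rewrite /A -tr_def; apply: tr_tr.
rewrite (e1 i (ltnSn i)) (e2 i (ltnSn i)).
by apply/eqP; rewrite -subr_eq0 -coefB; apply/eqP.
Qed.

Lemma coef0_exp (F : fieldType) (y : {poly F}) n : y`_0 = 1 -> (y ^+ n)`_0 = 1.
Proof. by move=> h; elim: n => [|n IH]; rewrite ?expr0 ?coef1 // exprS coef0M h IH mulr1. Qed.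

Lemma coef1_exp (F : fieldType) (y : {poly F}) n : y`_0 = 1 -> (y ^+ n)`_1 = n%:R * y`_1.
Proof.
move=> h; elim: n => [|n IH]; first by rewrite expr0 coef1 mul0r.
rewrite exprS coefM big_ord_recr big_ord_recl big_ord0 /= IH coef0_exp // h.
rewrite mulrSr; ring.
Qed.

Lemma Mval (F : fieldType) K (x : ps F) : in_M x -> forall j, (j < 1)%N -> (tr K x)`_j = 0.
Proof.
move=> hx j; rewrite ltnS leqn0 => /eqP ->; case: K => [|K]; first by rewrite /tr poly_def big_ord0 coef0.
by rewrite coef_tr.
Qed.

Lemma exp_val (F : fieldType) (y : {poly F}) : y`_0 = 0 -> forall n k, (k < n)%N -> (y ^+ n)`_k = 0.
Proof.
move=> h0 n k hk.
have h : forall j, (j < 1)%N -> y`_j = 0 by move=> j; rewrite ltnS leqn0 => /eqP ->.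
by have [h1 _] := val_exp h n; apply: h1; rewrite muln1.
Qed.

Lemma ar_mul (p K q : nat) : (0 < p)%N -> (p * K < q * p)%N -> (q * p < p * K + p)%N -> False.
Proof.
move=> hp; rewrite (mulnC p K) ltn_pmul2r // -mulSnr ltn_pmul2r // => h1 h2.
by move: h1; rewrite ltnNge -ltnS h2.
Qed.

Lemma sum_mulp (R : nmodType) (G : nat -> R) p K : (0 < p)%N ->
  (forall n, ~~ (p %| n)%N -> G n = 0) ->
  \sum_(n < p * K) G n = \sum_(k < K) G (p * k)%N.
Proof.
move=> hp hG; elim: K => [|K IH]; first by rewrite muln0 !big_ord0.
rewrite big_ord_recr /= -IH -!(big_mkord xpredT).
rewrite (big_cat_nat (n := p * K)) //=; last by rewrite leq_mul2l leqnSn orbT.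
congr (_ + _); rewrite mulnS addnC big_ltn; last by rewrite -{1}[(p * K)%N]addn0 ltn_add2l.
rewrite big1_seq ?addr0 // => n /andP [_]; rewrite mem_index_iota => /andP [h1 h2].
apply: hG; apply/negP => /dvdnP [q hq]; move: h1 h2; rewrite hq; exact: ar_mul.
Qed.

Lemma ps_exp_mul (F : fieldType) (s t : ps F) n :
  ps_exp (ps_mul s t) n = ps_mul (ps_exp s n) (ps_exp t n).
Proof.
apply: ps_ext => K.
apply: (eqt_trans (tr_exp _ _)).
apply: (eqt_trans (eqt_exp n (tr_mul _ _))).
rewrite exprMn; apply: eqt_sym; apply: (eqt_trans (tr_mul _ _)).
by apply: eqt_mul; apply: tr_exp.
Qed.

Lemma frob_inj (F : fieldType) p (hp : p \in [pchar F]) (s t : ps F) :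
  ps_exp s p = ps_exp t p -> s = t.
Proof.
move=> e; apply: functional_extensionality => k; elim/ltn_ind: k => k IH.
have p0 : (0 < p)%N by apply: prime_gt0; apply: pcharf_prime hp.
pose K := (p * k).+1.
pose Y := tr K s - tr K t.
have hkK : (k < K)%N by rewrite /K ltnS leq_pmull.
have hY : forall j, (j < k)%N -> Y`_j = 0.
  move=> j hj; have hjK := ltn_trans hj hkK; by rewrite coefB !coef_tr // IH // subrr.
have [_ hv] := val_exp hY p.
have hp' : p \in [pchar {poly F}] by rewrite pchar_poly.
have hYp : Y ^+ p = tr K s ^+ p - tr K t ^+ p.
  by rewrite -!(pFrobenius_autE hp') /Y rmorphB.
have : (Y ^+ p)`_(p * k) = 0.
  rewrite hYp coefB -(tr_exp s p (ltnSn _)) -(tr_exp t p (ltnSn _)) e subrr //.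
rewrite hv => /eqP; rewrite expf_eq0 p0 /= coefB !coef_tr // subr_eq0.
by move/eqP.
Qed.

Definition ps_inv (F : fieldType) (al : ps F) : ps F := Ev (fun _ => 1) (ps_sub (ps_one F) al).

Lemma inv_ok (F : fieldType) K (al : ps F) : in_U al ->
  eqt K (tr K al * tr K (ps_inv al)) 1.
Proof.
move=> hal.
have hM : in_M (ps_sub (ps_one F) al) by rewrite /in_M /ps_sub /ps_one hal subrr.
pose Y := tr K (ps_sub (ps_one F) al).
have h1 : eqt K (tr K al) (1 - Y).
  by move=> i hi; rewrite coefB coef1 !coef_tr // /ps_sub /ps_one; ring.
have h2 := tr_Ev (fun _ => 1) hM (eqt_refl (K:=K) Y).
apply: (eqt_trans (eqt_mul h1 h2)).
rewrite (eq_bigr (fun n : 'I_K => Y ^+ n)); last by move=> n _; rewrite mul1r.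
have -> : (1 - Y) * \sum_(n < K) Y ^+ n = 1 - Y ^+ K.
  by rewrite -[1 - Y ^+ K]opprB subrX1 -mulNr opprB.
move=> i hi; rewrite coefB (exp_val (y := Y)) ?subr0 //.
by rewrite /Y (Mval K hM (ltnSn 0)).
Qed.

Lemma eqt_widen (F : fieldType) (c : nat -> F) (X : {poly F}) K M : X`_0 = 0 -> (K <= M)%N ->
  eqt K (\sum_(n < K) (c n)%:P * X ^+ n) (\sum_(n < M) (c n)%:P * X ^+ n).
Proof.
move=> hX hKM i hi; rewrite !coef_sum.
apply: (widen_zero (G := fun n => ((c n)%:P * X ^+ n)`_i)) => // n hn.
by rewrite coefCM (exp_val hX) ?mulr0 //; apply: leq_trans hi hn.
Qed.

Lemma pow_identity (F : fieldType) p (hp : p \in [pchar F]) (a : nat -> F)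
  (haFp : forall n, exists m : nat, a n = m%:R)
  (hdiv : forall n, ~~ (p %| n)%N -> a n = 0) x :
  in_M x -> Ev a x = ps_exp (Ev (fun k => a (p * k)%N) x) p.
Proof.
move=> hx; apply: ps_ext => K.
have p0 : (0 < p)%N by apply: prime_gt0; apply: pcharf_prime hp.
pose X := tr K x.
have hX0 : X`_0 = 0 by rewrite /X (Mval K hx (ltnSn 0)).
apply: eqt_sym; apply: (eqt_trans (tr_exp _ _)).
apply: (eqt_trans (eqt_exp p (tr_Ev (fun k => a (p * k)%N) hx (eqt_refl (K:=K) X)))).
apply: eqt_sym; apply: (eqt_trans (tr_Ev a hx (eqt_refl (K:=K) X))).
have hp' : p \in [pchar {poly F}] by rewrite pchar_poly.
rewrite -(pFrobenius_autE hp') rmorph_sum.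
rewrite [Z in eqt _ _ Z](eq_bigr (fun n : 'I_K => (a (p * n)%N)%:P * X ^+ (p * n)%N)); last first.
  move=> n _ /=; rewrite (pFrobenius_autE hp') exprMn -polyC_exp -exprM (mulnC n p).
  have [m ->] := haFp (p * n)%N.
  by rewrite -(pFrobenius_autE hp) rmorph_nat.
rewrite -(sum_mulp (G := fun n => (a n)%:P * X ^+ n)) //; last first.
  by move=> n hn; rewrite hdiv // mul0r.
apply: eqt_widen => //; rewrite leq_pmull //.
Qed.

Lemma tr_scale (F : fieldType) K (c : F) (s : ps F) :
  eqt K (tr K (fun k => c * s k)) (c%:P * tr K s).
Proof. by move=> i hi; rewrite coefCM !coef_tr. Qed.

Lemma mulz_val (F : fieldType) (s z : ps F) n k : in_M z -> (k < n)%N ->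
  ps_mul s (ps_exp z n) k = 0.
Proof.
move=> hz hk; rewrite /ps_mul big1 // => i _; rewrite inM_val ?mulr0 //.
apply: leq_ltn_trans hk; exact: leq_subr.
Qed.

Lemma mul_low (F : fieldType) (s t : ps F) n k : (forall i, (i < n)%N -> s i = 0) -> (k < n)%N ->
  ps_mul s t k = 0.
Proof.
move=> hs hk; rewrite /ps_mul big1 // => i _; rewrite hs ?mul0r //.
have := ltn_ord i; rewrite ltnS => hi; exact: leq_ltn_trans hi hk.
Qed.

Lemma mulz_val2 (F : fieldType) (s z w : ps F) (c : F) n k : in_M z -> (k < n)%N ->
  ps_mul (fun k => c * ps_mul s (ps_exp z n) k) w k = 0.
Proof.
move=> hz hk; apply: (@mul_low _ _ _ n) => // i hi; by rewrite mulz_val ?mulr0.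
Qed.

Lemma mulM (F : fieldType) (s z : ps F) : in_M z -> in_M (ps_mul s z).
Proof. by move=> hz; rewrite /in_M /ps_mul big_ord_recl big_ord0 /= hz mulr0 addr0. Qed.
Lemma mulM' (F : fieldType) (s z : ps F) : in_M z -> in_M (ps_mul z s).
Proof. by move=> hz; rewrite /in_M /ps_mul big_ord_recl big_ord0 /= hz mul0r addr0. Qed.

Lemma construct_g (F : fieldType) p (hp : p \in [pchar F]) (f : ps F -> ps F) (a : nat -> F)
  (hfm : forall u v, in_U u -> in_U v -> f (ps_mul u v) = ps_mul (f u) (f v))
  (hfE : forall u, in_U u -> f u = Ev a (ps_sub u (ps_one F)))
  (ha0 : a 0%N = 1) (haFp : forall n, exists m : nat, a n = m%:R)
  (hdiv : forall n, ~~ (p %| n)%N -> a n = 0) :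
  exists g : ps F -> ps F, in_Lambda g /\ forall x, in_M x ->
    f (ps_add (ps_one F) x) = ps_exp (g (ps_add (ps_one F) x)) p.
Proof.
pose b := fun k => a (p * k)%N.
pose g := fun u => Ev b (ps_sub u (ps_one F)).
have hgf : forall u, in_U u -> f u = ps_exp (g u) p.
  move=> u hu; rewrite hfE // /g; apply: pow_identity => //; exact: inU_M.
have gU : forall u, in_U u -> in_U (g u).
  move=> u hu; rewrite /in_U /g /Ev /E big_ord_recl big_ord0 /= /b muln0 ha0 mul1r addr0.
  by rewrite /ps_one.
have gM : forall u v, in_U u -> in_U v -> g (ps_mul u v) = ps_mul (g u) (g v).
  move=> u v hu hv; apply: (frob_inj hp).
  rewrite ps_exp_mul -!hgf ?hfm //; exact: mul_U.
exists g; split; last first.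
  move=> x hx; apply: hgf; exact: inM_U.
split; first by split.
move=> al hal; exists (pi F); split.
  move=> e; have := congr1 (fun s => s 1%N) e; rewrite /pi /ps_zero /= => /eqP.
  by rewrite oner_eq0.
split.
  move=> u hu; have h' : u 0%N - al 0%N = 0.
    by apply: hu => j; rewrite leqn0 => /eqP ->.
  by move/eqP: h'; rewrite subr_eq0 hal => /eqP.
split.
  move=> u _ N; exists N => v _ huv i hi.
  rewrite /g /Ev /E; apply: eq_bigr => n _; congr (_ * _).
  rewrite -(coef_tr (K:=i.+1) (ps_exp (ps_sub u (ps_one F)) n)) //.
  rewrite -(coef_tr (K:=i.+1) (ps_exp (ps_sub v (ps_one F)) n)) //.
  rewrite (tr_exp (ps_sub u (ps_one F)) n (ltnSn i)) (tr_exp (ps_sub v (ps_one F)) n (ltnSn i)).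
  suff -> : tr i.+1 (ps_sub u (ps_one F)) = tr i.+1 (ps_sub v (ps_one F)) by [].
  apply: eq_poly => j hj; rewrite /ps_sub huv //.
  exact: leq_trans hj hi.
pose ai := ps_inv al.
pose z := ps_mul (pi F) ai.
have hz : in_M z by apply: mulM'.
pose c := fun n => (0%N, fun k => b n * ps_mul (g al) (ps_exp z n) k).
exists c; split.
  move=> B; exists B => n hn [k|k] hk //=.
  rewrite /lcoef /= addn0 mulz_val ?mulr0 //.
  by apply: leq_trans hn; move: hk; rewrite ltz_nat.
move=> u w hu hw.
pose t := fun n => ps_mul (c n).2 (ps_exp w n).
have ht : forall n k, (k < n)%N -> t n k = 0.
  by move=> n k hk; rewrite /t /c /= mulz_val2.
suff -> : g u = E t by apply: (series_E ht).
have hzw : in_M (ps_mul z w) by apply: mulM'.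
have hdec : u = ps_mul al (ps_add (ps_one F) (ps_mul z w)).
  apply: ps_ext => K; apply: eqt_sym.
  set X := 'X : {poly F}.
  apply: (eqt_trans (tr_mul _ _)).
  apply: (eqt_trans (q := tr K al * (1 + X * tr K ai * tr K w))).
    apply: eqt_mul => //; apply: (eqt_trans (tr_add _ _)); apply: eqt_add; first exact: tr_one.
    apply: (eqt_trans (tr_mul _ _)); apply: eqt_mul => //.
    apply: (eqt_trans (tr_mul _ _)); apply: eqt_mul => //; exact: tr_pi.
  have -> : tr K al * (1 + X * tr K ai * tr K w) = tr K al + (tr K al * tr K ai) * (X * tr K w) by ring.
  apply: (eqt_trans (q := tr K al + 1 * (X * tr K w))).
    apply: eqt_add => //; apply: eqt_mul => //; exact: inv_ok.
  rewrite mul1r.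
  apply: (eqt_trans (q := tr K al + (tr K u - tr K al))); last first.
    by have -> : tr K al + (tr K u - tr K al) = tr K u by ring.
  apply: eqt_add => //.
  apply: (eqt_trans (q := tr K (ps_mul (pi F) w))).
    apply: eqt_sym; apply: (eqt_trans (tr_mul _ _)); apply: eqt_mul => //; exact: tr_pi.
  rewrite hw; exact: tr_sub.
have h1 : in_U (ps_add (ps_one F) (ps_mul z w)) by apply: inM_U.
rewrite hdec gM //.
have -> : g (ps_add (ps_one F) (ps_mul z w)) = Ev b (ps_mul z w) by rewrite /g add_sub1.
apply: ps_ext => K.
apply: (eqt_trans (tr_mul _ _)).
apply: (eqt_trans (eqt_mul (eqt_refl (tr K (g al))) (tr_Ev b hzw (tr_mul _ _)))).
apply: eqt_sym.
apply: (eqt_trans (sum_tr (T := fun n => (b n)%:P * tr K (g al) * tr K z ^+ n * tr K w ^+ n) ht _)); last first.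
  apply: (eqt_eq (@eqt_refl _ K _)).
  by rewrite mulr_sumr; apply: eq_bigr => n _; rewrite exprMn; ring.
move=> n; rewrite /t /c /=.
apply: (eqt_trans (tr_mul _ _)).
apply: (eqt_trans (eqt_mul (tr_scale _ _) (tr_exp _ _))).
apply: (eqt_eq (q := (b n)%:P * (tr K (g al) * tr K z ^+ n) * tr K w ^+ n)); last by ring.
apply: eqt_mul => //; apply: eqt_mul => //.
apply: (eqt_trans (tr_mul _ _)); apply: eqt_mul => //; exact: tr_exp.
Qed.

Lemma ar3 (i j : nat) : (j < i)%N -> (i - j.+1 < i)%N.
Proof. lia. Qed.

Lemma cancel_unit (F : fieldType) K (q r : {poly F}) : q`_0 = 1 -> eqt K (q * r) 0 -> eqt K r 0.
Proof.
move=> hq h i; elim/ltn_ind: i => i IH hi.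
have := h i hi; rewrite coefM big_ord_recl /= hq mul1r coef0.
rewrite big1 ?addr0 ?subn0; first by [].
move=> j _.
have hj := ltn_ord j.
rewrite IH ?coef0 ?mulr0 //; first exact: ar3.
apply: leq_ltn_trans hi; exact: leq_subr.
Qed.

Lemma coef0_1X (F : fieldType) : (1 + 'X : {poly F})`_0 = 1.
Proof. by rewrite coefD coef1 coefX addr0. Qed.

Unset Implicit Arguments.
Theorem lemma2p2 (F : finFieldType) (p : nat) (hp : p \in [pchar F])
  (f : ps F -> ps F) (hf : in_Lambda f) (a : nat -> F)
  (ha0 : a 0%N = 1) (haFp : forall n, exists m : nat, a n = m%:R)
  (hfa : forall x, in_M x -> pseries_eval a x (f (ps_add (ps_one F) x))) :
  (forall n : nat, a n = 0 <-> hasse a n = ps_zero F) /\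
  (a 1%N = 0 <-> exists g : ps F -> ps F, in_Lambda g /\
     forall x, in_M x ->
       f (ps_add (ps_one F) x) = ps_exp (g (ps_add (ps_one F) x)) p).
Proof.
have [[fU fM] _] := hf.
have hfE : forall u, in_U u -> f u = Ev a (ps_sub u (ps_one F)).
  move=> u hu; rewrite {1}(ps_split u); apply: Ev_of_eval; first exact: inU_M.
  exact: hfa (inU_M hu).
have cl := claim fM hfE.
have part1 : forall n, a n = 0 <-> hasse a n = ps_zero F.
  move=> n; split => [han|hh].
    apply: ps_ext => K.
    have h0 : eqt K ((1 + 'X) ^+ n * tr K (hasse a n)) 0.
      by move=> i hi; rewrite (cl n K i hi) han polyC0 mul0r.
    have h1 := cancel_unit (coef0_exp n (coef0_1X F)) h0.
    by move=> i hi; rewrite h1 // coef0 coef_tr.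
  have := congr1 (fun s => s 0%N) hh; rewrite /hasse /ps_zero /= add0n binn mul1r.
  by [].
split => //.
split => [h1 | [g [hg hfg]]].
  have hdiv : forall n, ~~ (p %| n)%N -> a n = 0.
    move=> n hn.
    have hh := (part1 1%N).1 h1.
    case: n hn => [|n] hn; first by rewrite dvdn0 in hn.
    have := congr1 (fun s => s n) hh; rewrite /hasse /ps_zero /= addn1 bin1.
    move/eqP; rewrite mulf_eq0 => /orP [|/eqP //].
    by rewrite -(dvdn_pcharf hp) (negbTE hn).
  exact: (construct_g hp fM hfE ha0 haFp hdiv).
have hpi := hfg (pi F) (pi_M F).
have hU1 : in_U (ps_add (ps_one F) (pi F)) by apply: inM_U; exact: pi_M.
rewrite hfE // add_sub1 in hpi.
have hs := hg.1.1 _ hU1.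
move: hpi hs; set s := g _ => hpi hs.
have e1 : Ev a (pi F) 1%N = a 1%N.
  rewrite -(coef_tr (K:=2) (Ev a (pi F))) // (tr_Ev a (pi_M F) (@tr_pi _ 2%N) (ltnSn 1)).
  rewrite coef_sum !big_ord_recl big_ord0 /= !coefCM !coefXn /=.
  by rewrite mulr0 mulr1 add0r addr0.
rewrite -e1 hpi -(coef_tr (K:=2) (ps_exp s p)) // (tr_exp s p (ltnSn 1)) coef1_exp.
  by rewrite (pcharf0 hp) mul0r.
by rewrite coef_tr.
Qed.
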